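(* Let $X$ be a reflexive complex Banach space, let $(\Omega,\mathcal{A},\mu)$ be a probability space, and let $\xi:\Omega\to X$ be weakly measurable, possessing a weak (Pettis) expectation with $\mathrm{E}\,\xi=\int_\Omega\xi\,d\mu=0$. Suppose that $D=\{f\in X^\ast:\int_\Omega|f(\xi)|^2\,d\mu<+\infty\}$ is dense in $X^\ast$, and define $t(f,g)=\mathrm{E}\big(f(\xi)\overline{g(\xi)}\big)=\int_\Omega f(\xi)\overline{g(\xi)}\,d\mu$ for $f,g\in D$. Then $t$ is a positive, closed, sesquilinear form on $D\times D$.
   Context: $X^\ast$ denotes the space of continuous conjugate-linear functionals on $X$. A positive sesquilinear form $t$ on a subspace $D$ of a normed space $Y$ (here $Y=X^\ast$) is called closed if whenever $f_n\in D$, $f_n\to f$ in $Y$ and $t(f_n-f_m,f_n-f_m)\to0$ as $n,m\to\infty$, then $f\in D$ and $t(f_n-f,f_n-f)\to0$. *)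

(* Defs.v *)
From HB Require Import structures.
From mathcomp Require Import all_boot all_order all_algebra.
From mathcomp Require Import complex.
From mathcomp Require Import all_classical all_reals all_analysis.
Set Implicit Arguments. Unset Strict Implicit. Unset Printing Implicit Defensive.
Import Order.TTheory GRing.Theory Num.Theory.
Import numFieldNormedType.Exports.
Local Open Scope ring_scope.
Local Open Scope classical_set_scope.

Section Dual.
Context {R : realType} {X : normedModType R[i]}.

Definition conj_linear (f : X -> R[i]) : Prop :=
  (forall x y : X, f (x + y) = f x + f y) /\
  (forall (a : R[i]) (x : X), f (a *: x) = conjc a * f x).

(* membership in X^* : continuous conjugate-linear functionals *)
Definition in_dual (f : X -> R[i]) : Prop :=
  conj_linear f /\ continuous (f : X -> R[i]^o).

Definition dual_norm_le (f : X -> R[i]) (M : R[i]) : Prop :=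
  forall x : X, `|x| <= 1 -> `|f x| <= M.

Definition dscale (a : R[i]) (f : X -> R[i]) : X -> R[i] := fun x => a * f x.
Definition dadd (f g : X -> R[i]) : X -> R[i] := fun x => f x + g x.
Definition dsub (f g : X -> R[i]) : X -> R[i] := fun x => f x - g x.

Definition dual_cvg (F : nat -> X -> R[i]) (f : X -> R[i]) : Prop :=
  forall e : R[i], 0 < e -> exists N : nat, forall n : nat, (N <= n)%N ->
    dual_norm_le (dsub (F n) f) e.

Definition in_bidual (phi : (X -> R[i]) -> R[i]) : Prop :=
  (forall f g, in_dual f -> in_dual g -> phi (dadd f g) = phi f + phi g) /\
  (forall a f, in_dual f -> phi (dscale a f) = conjc a * phi f) /\
  (forall f, in_dual f -> forall e : R[i], 0 < e -> exists d : R[i], 0 < d /\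
     forall g, in_dual g -> dual_norm_le (dsub g f) d -> `|phi g - phi f| <= e).

(* reflexivity: the canonical map x |-> (f |-> conj (f x)) of X into the bidual
   is onto *)
Definition reflexive_space : Prop :=
  forall phi, in_bidual phi ->
    exists x : X, forall f, in_dual f -> phi f = conjc (f x).

Definition dual_subspace (D : set (X -> R[i])) : Prop :=
  (forall f, D f -> in_dual f) /\ D (fun _ => 0) /\
  (forall a f g, D f -> D g -> D (dadd (dscale a f) g)).

Definition sesquilinear_on (D : set (X -> R[i]))
    (t : (X -> R[i]) -> (X -> R[i]) -> R[i]) : Prop :=
  (forall a f g h, D f -> D g -> D h ->
     t (dadd (dscale a f) g) h = a * t f h + t g h) /\
  (forall a f g h, D f -> D g -> D h ->
     t h (dadd (dscale a f) g) = conjc a * t h f + t h g).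

Definition positive_on (D : set (X -> R[i]))
    (t : (X -> R[i]) -> (X -> R[i]) -> R[i]) : Prop :=
  forall f, D f -> 0 <= t f f.

Definition closed_form_on (D : set (X -> R[i]))
    (t : (X -> R[i]) -> (X -> R[i]) -> R[i]) : Prop :=
  forall (F : nat -> X -> R[i]) (f : X -> R[i]),
    (forall n, D (F n)) -> in_dual f -> dual_cvg F f ->
    (forall e : R[i], 0 < e -> exists N : nat, forall n m : nat,
        (N <= n)%N -> (N <= m)%N ->
        `|t (dsub (F n) (F m)) (dsub (F n) (F m))| <= e) ->
    D f /\
    (forall e : R[i], 0 < e -> exists N : nat, forall n : nat, (N <= n)%N ->
        `|t (dsub (F n) f) (dsub (F n) f)| <= e).

End Dual.

Section ComplexIntegration.
Context {d : measure_display} {T : measurableType d} {R : realType}.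

Definition cmeasurable (h : T -> R[i]) : Prop :=
  measurable_fun setT (fun w => complex.Re (h w)) /\
  measurable_fun setT (fun w => complex.Im (h w)).

Definition cintegrable (mu : {measure set T -> \bar R}) (h : T -> R[i]) : Prop :=
  mu.-integrable setT (fun w => (complex.Re (h w))%:E) /\
  mu.-integrable setT (fun w => (complex.Im (h w))%:E).

Definition cintegral (mu : {measure set T -> \bar R}) (h : T -> R[i]) : R[i] :=
  Complex (Rintegral mu setT (fun w => complex.Re (h w)))
          (Rintegral mu setT (fun w => complex.Im (h w))).

End ComplexIntegration.

(* Main.v *)
Require Import Defs.
From HB Require Import structures.
From mathcomp Require Import all_boot all_order all_algebra.
From mathcomp Require Import complex.
From mathcomp Require Import all_classical all_reals all_analysis.
From mathcomp Require Import measurable_realfun.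
From mathcomp Require Import ring lra.
Import Order.TTheory GRing.Theory Num.Theory.
Import numFieldNormedType.Exports.
Local Open Scope ring_scope.
Local Open Scope classical_set_scope.



Section Alg.
Context {R : realType}.
Local Open Scope complex_scope.
Definition sq (z : R[i]) : R := complex.Re z ^+ 2 + complex.Im z ^+ 2.

Lemma csq_ge0 z : 0 <= sq z.
Proof. by rewrite /sq addr_ge0 // sqr_ge0. Qed.

Lemma cRe_normsq (z : R[i]) : complex.Re (`|z| ^+ 2) = sq z.
Proof. by rewrite -add_Re2_Im2. Qed.

Lemma cReMJ (z w : R[i]) : complex.Re (z * conjc w) = complex.Re z * complex.Re w + complex.Im z * complex.Im w.
Proof. case: z w => a b [c e] /=; ring. Qed.

Lemma cImMJ (z w : R[i]) : complex.Im (z * conjc w) = complex.Im z * complex.Re w - complex.Re z * complex.Im w.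
Proof. case: z w => a b [c e] /=; ring. Qed.

Lemma cReD (z w : R[i]) : complex.Re (z + w) = complex.Re z + complex.Re w.
Proof. by case: z w => a b [c e]. Qed.
Lemma cImD (z w : R[i]) : complex.Im (z + w) = complex.Im z + complex.Im w.
Proof. by case: z w => a b [c e]. Qed.
Lemma cReB (z w : R[i]) : complex.Re (z - w) = complex.Re z - complex.Re w.
Proof. by case: z w => a b [c e]. Qed.
Lemma cImB (z w : R[i]) : complex.Im (z - w) = complex.Im z - complex.Im w.
Proof. by case: z w => a b [c e]. Qed.
Lemma cReM (z w : R[i]) : complex.Re (z * w) = complex.Re z * complex.Re w - complex.Im z * complex.Im w.
Proof. by case: z w => a b [c e]. Qed.
Lemma cImM (z w : R[i]) : complex.Im (z * w) = complex.Re z * complex.Im w + complex.Im z * complex.Re w.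
Proof. case: z w => a b [c e] /=; ring. Qed.

Lemma csqMJ (z : R[i]) : z * conjc z = (sq z)%:C.
Proof. apply/eqP; rewrite eq_complex cReMJ cImMJ /sq /=; apply/andP; split; apply/eqP; ring. Qed.

Lemma bnd_prod (a b c e : R) : `|a * c + b * e| <= (a^+2 + b^+2) + (c^+2 + e^+2).
Proof.
have h1 := sqr_ge0 (a + c); have h2 := sqr_ge0 (b + e).
have h3 := sqr_ge0 (a - c); have h4 := sqr_ge0 (b - e).
have h5 := sqr_ge0 a; have h6 := sqr_ge0 b; have h7 := sqr_ge0 c; have h8 := sqr_ge0 e.
rewrite ler_norml; apply/andP; split; nra. Qed.
Lemma bnd_prod2 (a b c e : R) : `|b * c - a * e| <= (a^+2 + b^+2) + (c^+2 + e^+2).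
Proof.
have h1 := sqr_ge0 (b + c); have h2 := sqr_ge0 (a + e).
have h3 := sqr_ge0 (b - c); have h4 := sqr_ge0 (a - e).
have h5 := sqr_ge0 a; have h6 := sqr_ge0 b; have h7 := sqr_ge0 c; have h8 := sqr_ge0 e.
rewrite ler_norml; apply/andP; split; nra. Qed.

Lemma csqM (a z : R[i]) : sq (a * z) = sq a * sq z.
Proof. rewrite /sq cReM cImM; ring. Qed.
Lemma csqD (u w : R[i]) : sq (u + w) <= 2 * sq u + 2 * sq w.
Proof. rewrite /sq cReD cImD.
have h1 := sqr_ge0 (complex.Re u - complex.Re w); have h2 := sqr_ge0 (complex.Im u - complex.Im w); nra. Qed.
Lemma csqB (u w : R[i]) : sq (u - w) <= 2 * sq u + 2 * sq w.
Proof. rewrite /sq cReB cImB.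
have h1 := sqr_ge0 (complex.Re u + complex.Re w); have h2 := sqr_ge0 (complex.Im u + complex.Im w); nra. Qed.
Lemma csq_lin (a z w : R[i]) : sq (a * z + w) <= 2 * sq a * sq z + 2 * sq w.
Proof. by rewrite -mulrA -csqM csqD. Qed.
End Alg.


Section Int.
Context {R : realType} {d : measure_display} {T : measurableType d}
  (mu : {measure set T -> \bar R}).

Definition L2 (h : T -> R[i]) := cmeasurable h /\
  mu.-integrable setT (EFin \o (fun w => sq (h w))).

Lemma msq (h : T -> R[i]) : cmeasurable h -> measurable_fun setT (fun w => sq (h w)).
Proof. by case=> m1 m2; apply: measurable_funD; exact: measurable_funX. Qed.

Lemma L2P (h : T -> R[i]) : cmeasurable h -> (\int[mu]_w (sq (h w))%:E < +oo)%E -> L2 h.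
Proof.
move=> mh fin; split=> //; apply/integrableP; split.
  exact/measurable_EFinP/msq.
under eq_integral do rewrite /= ger0_norm ?csq_ge0//.
by [].
Qed.

Lemma L2_lt (h : T -> R[i]) : L2 h -> (\int[mu]_w (sq (h w))%:E < +oo)%E.
Proof. by case=> _ hi; exact: (integrable_lty measurableT hi). Qed.

Lemma cmeas_lin a (h1 h2 : T -> R[i]) : cmeasurable h1 -> cmeasurable h2 ->
  cmeasurable (fun w => a * h1 w + h2 w).
Proof.
case=> r1 i1 [r2 i2]; split.
  rewrite (_ : (fun w => _) = (fun w => complex.Re a * complex.Re (h1 w)
     - complex.Im a * complex.Im (h1 w) + complex.Re (h2 w))); last first.
    by apply/funext => w; rewrite cReD cReM.
  by apply: measurable_funD => //; apply: measurable_funB;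
     apply: measurable_funM => //; exact: measurable_cst.
rewrite (_ : (fun w => _) = (fun w => complex.Re a * complex.Im (h1 w)
   + complex.Im a * complex.Re (h1 w) + complex.Im (h2 w))); last first.
  by apply/funext => w; rewrite cImD cImM.
by apply: measurable_funD => //; apply: measurable_funD;
   apply: measurable_funM => //; exact: measurable_cst.
Qed.

Lemma L2_lin a (h1 h2 : T -> R[i]) : L2 h1 -> L2 h2 -> L2 (fun w => a * h1 w + h2 w).
Proof.
case=> m1 i1 [m2 i2]; split; first exact: cmeas_lin.
apply: (@le_integrable _ _ _ mu setT measurableT _ (fun w =>
   ((2 * sq a)%:E * (EFin \o (fun w => sq (h1 w))) w
    + (2%:R)%:E * (EFin \o (fun w => sq (h2 w))) w)%E)) => //.
- exact/measurable_EFinP/msq/cmeas_lin.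
- move=> w _ /=; rewrite lee_fin.
  rewrite !ger0_norm ?csq_ge0 ?csq_lin //.
  by rewrite addr_ge0 // mulr_ge0 // ?mulr_ge0 // csq_ge0.
- by apply: integrableD => //; apply: integrableZl.
Qed.

Lemma L2_sub (h1 h2 : T -> R[i]) : L2 h1 -> L2 h2 -> L2 (fun w => h1 w - h2 w).
Proof.
move=> l1 l2; have := @L2_lin (-1) _ _ l2 l1.
by rewrite (_ : (fun w => _) = (fun w => h1 w - h2 w)) //;
   apply/funext => w; rewrite mulN1r addrC.
Qed.

Lemma L2_prod (h1 h2 : T -> R[i]) : L2 h1 -> L2 h2 -> cintegrable mu (fun w => h1 w * conjc (h2 w)).
Proof.
case=> [[r1 j1] i1] [[r2 j2] i2]; split.
- apply: (@le_integrable _ _ _ mu setT measurableT _ (fun w =>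
   ((EFin \o (fun w => sq (h1 w))) w + (EFin \o (fun w => sq (h2 w))) w)%E)) => //.
  + apply/measurable_EFinP.
    rewrite (_ : (fun w => _) = (fun w => complex.Re (h1 w) * complex.Re (h2 w)
       + complex.Im (h1 w) * complex.Im (h2 w))); last first.
      by apply/funext => w; rewrite cReMJ.
    by apply: measurable_funD; apply: measurable_funM.
  + move=> w _ /=; rewrite lee_fin cReMJ.
    rewrite [X in _ <= X]ger0_norm; last by rewrite addr_ge0 // csq_ge0.
    exact: bnd_prod.
  + by apply: integrableD.
- apply: (@le_integrable _ _ _ mu setT measurableT _ (fun w =>
   ((EFin \o (fun w => sq (h1 w))) w + (EFin \o (fun w => sq (h2 w))) w)%E)) => //.
  + apply/measurable_EFinP.
    rewrite (_ : (fun w => _) = (fun w => complex.Im (h1 w) * complex.Re (h2 w)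
       - complex.Re (h1 w) * complex.Im (h2 w))); last first.
      by apply/funext => w; rewrite cImMJ.
    by apply: measurable_funB; apply: measurable_funM.
  + move=> w _ /=; rewrite lee_fin cImMJ.
    rewrite [X in _ <= X]ger0_norm; last by rewrite addr_ge0 // csq_ge0.
    exact: bnd_prod2.
  + by apply: integrableD.
Qed.

Lemma cint_lin a (p1 p2 : T -> R[i]) : cintegrable mu p1 -> cintegrable mu p2 ->
  cintegral mu (fun w => a * p1 w + p2 w) = a * cintegral mu p1 + cintegral mu p2.
Proof.
case=> r1 i1 [r2 i2].
have iZ (k : R) (f : T -> R) : mu.-integrable setT (EFin \o f) ->
    mu.-integrable setT (EFin \o (fun w => k * f w)).
  move=> h; rewrite (_ : _ \o _ = (fun w => k%:E * (EFin \o f) w)%E).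
    exact: integrableZl.
  by apply/funext => w /=; rewrite EFinM.
have iD (f g : T -> R) : mu.-integrable setT (EFin \o f) ->
    mu.-integrable setT (EFin \o g) ->
    mu.-integrable setT (EFin \o (fun w => f w + g w)).
  move=> hf hg; rewrite (_ : _ \o _ = (EFin \o f) \+ (EFin \o g))%E.
    exact: integrableD.
  by apply/funext => w /=; rewrite EFinD.
have iB (f g : T -> R) : mu.-integrable setT (EFin \o f) ->
    mu.-integrable setT (EFin \o g) ->
    mu.-integrable setT (EFin \o (fun w => f w - g w)).
  move=> hf hg; rewrite (_ : _ \o _ = (EFin \o f) \- (EFin \o g))%E.
    exact: integrableB.
  by apply/funext => w /=; rewrite EFinB.
rewrite /cintegral.
under eq_Rintegral do rewrite cReD cReM.
under [X in Complex _ X]eq_Rintegral do rewrite cImD cImM.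
rewrite RintegralD //; last by apply: iB; apply: iZ.
rewrite RintegralB //; try by apply: iZ.
rewrite RintegralZl // RintegralZl //.
rewrite [X in Complex _ X]RintegralD //; last by apply: iD; apply: iZ.
rewrite RintegralD //; try by apply: iZ.
rewrite RintegralZl // RintegralZl //.
by case: a => a1 a2 /=; apply/eqP; rewrite eq_complex /= !eqxx.
Qed.
End Int.


Section DualAux.
Context {R : realType} {X : normedModType R[i]}.

Lemma cconj_ge0 (z : R[i]) : 0 <= z -> conjc z = z.
Proof.
case: z => a b; rewrite lecE /= => /andP[/eqP -> _].
by apply/eqP; rewrite eq_complex /= oppr0 !eqxx.
Qed.

Lemma dual0 (f : X -> R[i]) : conj_linear f -> f 0 = 0.
Proof.
case=> hadd _; have := hadd 0 0; rewrite addr0.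
by move=> /(congr1 (fun z => z - f 0)); rewrite addrK subrr.
Qed.

Lemma in_dual_zero : in_dual (fun _ : X => (0 : R[i])).
Proof.
split; first by split => *; rewrite ?addr0 ?mulr0.
move=> x; exact: cvg_cst.
Qed.

Lemma in_dual_lin (a : R[i]) (f g : X -> R[i]) : in_dual f -> in_dual g ->
  in_dual (Defs.dadd (Defs.dscale a f) g).
Proof.
case=> [[fa fs] fc] [[ga gs] gc]; split.
  split => [x y|c x]; rewrite /Defs.dadd /Defs.dscale.
    by rewrite fa ga; ring.
  by rewrite fs gs; ring.
move=> x; rewrite /Defs.dadd /Defs.dscale.
apply: cvgD; last exact: gc.
apply: cvgMr. exact: fc.
Qed.

Lemma dual_pt (F : nat -> X -> R[i]) (f : X -> R[i]) :
  (forall n, in_dual (F n)) -> in_dual f -> dual_cvg F f ->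
  forall (x : X) (e : R), 0 < e -> exists N : nat, forall n, (N <= n)%N ->
    `|F n x - f x| <= e%:C%C.
Proof.
move=> hF hf hc x e e0.
pose s : R[i] := `|x| + 1.
have s0 : 0 < s by rewrite /s ltr_wpDl.
have e0' : 0 < e%:C%C / s by rewrite divr_gt0 // ltcR.
have [N hN] := hc _ e0'.
exists N => n /hN hn.
pose y := s^-1 *: x.
have hy : `|y| <= 1.
  rewrite /y normrZ normfV (gtr0_norm s0) ler_pdivrMl // mulr1 /s.
  by rewrite lerDl.
have xy : x = s *: y by rewrite /y scalerA mulfV ?gt_eqF // scale1r.
have := hn y hy; rewrite /Defs.dsub.
case: (hF n) => [[_ hFs] _]; case: hf => [[_ hfs] _].
have sC : conjc s = s by apply: cconj_ge0; exact: ltW.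
rewrite xy hFs hfs sC -mulrBr normrM (gtr0_norm s0).
move=> h; have := ler_wpM2l (ltW s0) h.
by rewrite mulrCA mulfV ?gt_eqF // mulr1.
Qed.
End DualAux.


Section More.
Context {R : realType}.
Local Open Scope complex_scope.

Lemma normC_real (r : R) : `|r%:C| = `|r|%:C.
Proof. by rewrite normc_def /= expr0n /= addr0 sqrtr_sqr. Qed.

Lemma Re_le (z : R[i]) (e : R) : `|z| <= e%:C -> `|complex.Re z| <= e.
Proof.
rewrite normc_def lecR => h; apply: le_trans h; rewrite -sqrtr_sqr.
by apply: ler_wsqrtr; rewrite lerDl sqr_ge0.
Qed.

Lemma Im_le (z : R[i]) (e : R) : `|z| <= e%:C -> `|complex.Im z| <= e.
Proof.
rewrite normc_def lecR => h; apply: le_trans h; rewrite -sqrtr_sqr.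
by apply: ler_wsqrtr; rewrite lerDr sqr_ge0.
Qed.

Lemma pos_C (e : R[i]) : 0 < e -> e = (complex.Re e)%:C /\ 0 < complex.Re e.
Proof.
case: e => a b; rewrite ltcE /= => /andP[/eqP -> h]; split => //.
Qed.

Lemma einf_le (u : nat -> \bar R) (N : nat) (e : \bar R) :
  (forall m, (N <= m)%N -> (u m <= e)%E) -> (limn_einf u <= e)%E.
Proof.
move=> h; rewrite limn_einf_lim; apply: lime_le; first exact: is_cvg_einfs.
exists N => // n /= Nn; apply: le_trans (h _ Nn).
by apply: ereal_inf_lbound; exists n => /=.
Qed.

Lemma cvg_sq (u : R[i]) (v : nat -> R[i]) (l : R[i]) :
  (forall e : R, 0 < e -> exists N : nat, forall m, (N <= m)%N -> `|v m - l| <= e%:C) ->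
  (fun m => (sq (u - v m))%:E) @ \oo --> (sq (u - l))%:E.
Proof.
move=> h.
have cRe : (fun m => complex.Re (v m)) @ \oo --> complex.Re l.
  apply/cvgrPdist_le => e e0; have [N hN] := h e e0.
  exists N => // m /= Nm.
  by rewrite -cReB; apply: Re_le; rewrite distrC; exact: hN.
have cIm : (fun m => complex.Im (v m)) @ \oo --> complex.Im l.
  apply/cvgrPdist_le => e e0; have [N hN] := h e e0.
  exists N => // m /= Nm.
  by rewrite -cImB; apply: Im_le; rewrite distrC; exact: hN.
apply: cvg_EFin; first exact: nearW.
rewrite /comp /sq.
under eq_fun do rewrite cReB cImB !expr2.
rewrite cReB cImB !expr2.
apply: cvgD; apply: cvgM; apply: cvgB => //; exact: cvg_cst.
Qed.
End More.

Section T.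
Context {R : realType} {d : measure_display} {T : measurableType d}
  (mu : {measure set T -> \bar R}).

Lemma tnorm (h : T -> R[i]) : cintegral mu (fun w => h w * conjc (h w)) =
  ((Rintegral mu setT (fun w => sq (h w)))%:C)%C.
Proof.
rewrite /cintegral; apply/eqP; rewrite eq_complex /=; apply/andP; split; apply/eqP.
  by apply: eq_Rintegral => w _; rewrite csqMJ.
rewrite (@eq_Rintegral _ _ _ mu _ (fun _ => 0)); last by move=> w _; rewrite csqMJ.
by rewrite Rintegral_cst // mul0r.
Qed.

Lemma cmeas_sub (h1 h2 : T -> R[i]) : cmeasurable h1 -> cmeasurable h2 ->
  cmeasurable (fun w => h1 w - h2 w).
Proof.
move=> m1 m2; have := @cmeas_lin _ _ _ (-1) _ _ m2 m1.
by rewrite (_ : (fun w => _) = (fun w => h1 w - h2 w)) //;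
   apply/funext => w; rewrite mulN1r addrC.
Qed.

Lemma L2_int_eq (h : T -> R[i]) : L2 mu h ->
  (\int[mu]_w (sq (h w))%:E)%E = (Rintegral mu setT (fun w => sq (h w)))%:E.
Proof.
case=> _ hi; rewrite /Rintegral fineK //.
exact: (integrable_fin_num measurableT hi).
Qed.
End T.
Arguments L2_sub {R d T mu h1 h2}.
Arguments L2_lin {R d T mu a h1 h2}.
Arguments L2_prod {R d T mu h1 h2}.
Arguments L2_int_eq {R d T mu h}.
Arguments cmeas_sub {R d T h1 h2}.

Theorem theorem7 (R : realType) (X : completeNormedModType R[i])
  (d : measure_display) (Omega : measurableType d) (P : probability Omega R)
  (xi : Omega -> X) :
  @reflexive_space R X ->
  (* xi is weakly measurable *)
  (forall f : X -> R[i], in_dual f -> cmeasurable (fun w => f (xi w))) ->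
  (* xi has a weak (Pettis) expectation, equal to 0 *)
  (forall f : X -> R[i], in_dual f ->
     cintegrable P (fun w => f (xi w)) /\ cintegral P (fun w => f (xi w)) = 0) ->
  let D := [set f : X -> R[i] | in_dual f /\
              (\int[P]_w (complex.Re (`|f (xi w)| ^+ 2))%:E < +oo)%E] in
  (* D is dense in X^* *)
  (forall f : X -> R[i], in_dual f -> forall e : R[i], 0 < e ->
     exists g, D g /\ dual_norm_le (dsub f g) e) ->
  let t := fun f g : X -> R[i] =>
             cintegral P (fun w => f (xi w) * conjc (g (xi w))) in
  dual_subspace D /\ positive_on D t /\ sesquilinear_on D t /\
  closed_form_on D t.
Proof.
move=> _ hmeas _ D _ t.
have E (z : R[i]) : complex.Re (`|z| ^+ 2) = sq z by exact: cRe_normsq.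
have EE (f : X -> R[i]) : (fun w => (complex.Re (`|f (xi w)| ^+ 2))%:E) =
    (fun w => (sq (f (xi w)))%:E).
  by apply/funext => w; rewrite E.
have DL2 f : D f <-> in_dual f /\ L2 P (fun w => f (xi w)).
  split.
    case=> hf hi; split => //; apply: L2P; first exact: hmeas.
    by move: hi; rewrite EE.
  case=> hf hl; split => //.
  by rewrite EE; exact: L2_lt.
have Dd f : D f -> in_dual f by case.
have DL f : D f -> L2 P (fun w => f (xi w)) by move/DL2 => [].
split.
  split => //; split.
    apply/DL2; split; first exact: in_dual_zero.
    split; first by split; exact: measurable_cst.
    rewrite (_ : _ \o _ = cst 0%E); first exact: integrable0.
    by apply/funext => w /=; rewrite /sq /= expr0n /= addr0.
  move=> a f g Df Dg; apply/DL2; split; first by apply: in_dual_lin; exact: Dd.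
  exact: L2_lin (DL _ Df) (DL _ Dg).
split.
  move=> f Df; rewrite /t tnorm ler0c.
  by apply: Rintegral_ge0 => w _; exact: csq_ge0.
split.
  split => a f g h Df Dg Dh; rewrite /t /Defs.dadd /Defs.dscale.
    rewrite -cint_lin; try (apply: L2_prod; exact: DL).
    by congr cintegral; apply/funext => w; ring.
  rewrite -cint_lin; try (apply: L2_prod; exact: DL).
  by congr cintegral; apply/funext => w; rewrite rmorphD rmorphM /=; ring.
move=> F f hFD hf hc hC.
have hFd n : in_dual (F n) := Dd _ (hFD n).
have hL n := DL _ (hFD n).
have mg : cmeasurable (fun w => f (xi w)) := hmeas f hf.
have pt w : forall e : R, 0 < e -> exists N : nat, forall m, (N <= m)%N ->
    `|F m (xi w) - f (xi w)| <= (e%:C)%C := @dual_pt _ _ F f hFd hf hc (xi w).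
have hRC : forall e : R, 0 < e -> exists N : nat, forall n m, (N <= n)%N -> (N <= m)%N ->
   (\int[P]_w (sq (F n (xi w) - F m (xi w)))%:E <= e%:E)%E.
  move=> e e0; have e0C : 0 < (e%:C)%C by rewrite ltcR.
  have [N hN] := hC _ e0C.
  exists N => n m Nn Nm; have := hN n m Nn Nm.
  rewrite /t /Defs.dsub tnorm normC_real lecR => hle.
  rewrite (L2_int_eq (L2_sub (hL n) (hL m))) lee_fin.
  exact: le_trans (ler_norm _) hle.
have hFat : forall e : R, 0 < e -> exists N : nat, forall n, (N <= n)%N ->
   (\int[P]_w (sq (F n (xi w) - f (xi w)))%:E <= e%:E)%E.
  move=> e e0; have [N hN] := hRC e e0; exists N => n Nn.
  rewrite (_ : (fun w => _) = fun w =>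
      limn_einf (fun m => (sq (F n (xi w) - F m (xi w)))%:E)); last first.
    apply/funext => w; apply/esym; apply: (cvg_limn_einf_sup _).1.
    apply: cvg_sq; exact: pt.
  apply: (le_trans (@fatou _ _ _ P setT measurableT
            (fun m w => (sq (F n (xi w) - F m (xi w)))%:E) _ _)).
  - move=> m; apply/measurable_EFinP/msq/cmeas_sub; [exact: (hL n).1 | exact: (hL m).1].
  - move=> m w _; rewrite lee_fin; exact: csq_ge0.
  - apply: (einf_le _ N) => m Nm; exact: hN.
have [N0 hN0] := hFat 1 ltr01.
have L2diff : L2 P (fun w => F N0 (xi w) - f (xi w)).
  apply: L2P; first exact: cmeas_sub ((hL N0).1) mg.
  exact: le_lt_trans (hN0 N0 (leqnn _)) (ltey _).
have L2f : L2 P (fun w => f (xi w)).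
  have := L2_sub (hL N0) L2diff.
  by rewrite (_ : (fun w => _) = fun w => f (xi w)) //; apply/funext => w; ring.
split; first by apply/DL2.
move=> e e0; have [eE e0'] := pos_C _ e0; rewrite eE.
have [N hN] := hFat _ e0'; exists N => n Nn.
rewrite /t /Defs.dsub tnorm normC_real lecR ger0_norm; last first.
  by apply: Rintegral_ge0 => w _; exact: csq_ge0.
have hl := L2_sub (hL n) L2f.
by rewrite -lee_fin -(L2_int_eq hl); exact: hN.
Qed.
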